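(* Let $S$ be an inverse semigroup and $\alpha=(A_s,\alpha_s)_{s\in S}$ a partial action of $S$ on a ring $A$. Define $\gamma_\alpha:S\to\mathcal{I}(A)$ by letting $\gamma_\alpha(s)$ be the bijection $A_{s^{-1}}\to A_s$ (between subsets of the underlying set of $A$) given by $\gamma_\alpha(s)(a)=\alpha_s(a)$. Then $\gamma_\alpha$ is an inverse semigroup premorphism.
   Context: $S$ is an inverse semigroup with set of idempotents $E(S)$ and natural partial order $s\preceq t$ iff $s=te$ for some $e\in E(S)$. A partial action of $S$ on a ring $A$ is a family of ideals $A_{ss^{-1}}$ of $A$, ideals $A_s$ of $A_{ss^{-1}}$, and ring isomorphisms $\alpha_s:A_{s^{-1}}\to A_s$ ($s\in S$) such that (P1') $A=\sum_{e\in E(S)}A_e$; (P2') $\alpha_s(A_{s^{-1}}\cap A_t)=A_s\cap A_{st}$ for all $s,t$; (P3') $\alpha_s(\alpha_t(a))=\alpha_{st}(a)$ for all $a\in A_{t^{-1}}\cap A_{(st)^{-1}}$. $\mathcal{I}(A)$ is the symmetric inverse semigroup of all bijections between subsets of the underlying set of $A$, under composition of partial maps. A map $\psi:S\to T$ between inverse semigroups is a premorphism if for all $s,t\in S$: (i) $\psi(s)\psi(t)\preceq\psi(st)$; (ii) $\psi(s)^{-1}=\psi(s^{-1})$; (iii) $s\preceq t$ implies $\psi(s)\preceq\psi(t)$. *)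

(* Defs.v *)
From Stdlib Require List.
From mathcomp Require Import all_boot all_algebra.
Set Implicit Arguments. Unset Strict Implicit. Unset Printing Implicit Defensive.
Import GRing.Theory.
Local Open Scope ring_scope.

Record invSemigroup := InvSemigroup {
  isg_car :> Type;
  isg_mul : isg_car -> isg_car -> isg_car;
  isg_inv : isg_car -> isg_car;
  isg_mulA : forall x y z, isg_mul x (isg_mul y z) = isg_mul (isg_mul x y) z;
  isg_inv1 : forall s, isg_mul (isg_mul s (isg_inv s)) s = s;
  isg_inv2 : forall s, isg_mul (isg_mul (isg_inv s) s) (isg_inv s) = isg_inv s;
  isg_inv_uniq : forall s t, isg_mul (isg_mul s t) s = s ->
                   isg_mul (isg_mul t s) t = t -> t = isg_inv s }.

Definition idempotent_el (T : Type) (mul : T -> T -> T) (e : T) : Prop :=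
  mul e e = e.
Definition nat_le (T : Type) (mul : T -> T -> T) (s t : T) : Prop :=
  exists2 e, idempotent_el mul e & s = mul t e.

Definition premorphism (S : invSemigroup) (T : Type)
  (mulT : T -> T -> T) (invT : T -> T) (psi : S -> T) : Prop :=
  [/\ forall s t : S, nat_le mulT (mulT (psi s) (psi t)) (psi (isg_mul s t)),
      forall s : S, invT (psi s) = psi (isg_inv s) &
      forall s t : S, nat_le (@isg_mul S) s t -> nat_le mulT (psi s) (psi t)].

(* A bijection between subsets of X, represented by its graph: a functional
   and injective relation (domain = {x | exists y, rel x y}). *)
Record pbij (X : Type) := PBij {
  pb_rel : X -> X -> Prop;
  pb_fun : forall x y z, pb_rel x y -> pb_rel x z -> y = z;
  pb_inj : forall x y z, pb_rel x z -> pb_rel y z -> x = y }.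

Definition pb_comp_rel X (f g : pbij X) : X -> X -> Prop :=
  fun x z => exists y, pb_rel g x y /\ pb_rel f y z.

Lemma pb_comp_fun X (f g : pbij X) x y z :
  pb_comp_rel f g x y -> pb_comp_rel f g x z -> y = z.
Proof.
move=> [u [gu fu]] [v [gv fv]].
have euv := pb_fun gu gv; subst v; exact: pb_fun fu fv.
Qed.

Lemma pb_comp_inj X (f g : pbij X) x y z :
  pb_comp_rel f g x z -> pb_comp_rel f g y z -> x = y.
Proof.
move=> [u [gu fu]] [v [gv fv]].
have euv := pb_inj fu fv; subst v; exact: pb_inj gu gv.
Qed.

Definition pb_comp X (f g : pbij X) : pbij X :=
  PBij (@pb_comp_fun X f g) (@pb_comp_inj X f g).

Definition pb_inv X (f : pbij X) : pbij X :=
  PBij (fun x y z (h1 : pb_rel f y x) (h2 : pb_rel f z x) => pb_inj h1 h2)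
       (fun x y z (h1 : pb_rel f z x) (h2 : pb_rel f z y) => pb_fun h1 h2).

Definition is_ideal (A : pzRingType) (I : A -> Prop) : Prop :=
  [/\ I 0, (forall x y, I x -> I y -> I (x - y)) &
      forall a x, I x -> I (a * x) /\ I (x * a)].

Definition is_ideal_of (A : pzRingType) (J I : A -> Prop) : Prop :=
  [/\ forall x, I x -> J x, I 0, (forall x y, I x -> I y -> I (x - y)) &
      forall a x, J a -> I x -> I (a * x) /\ I (x * a)].

(* f restricts to a ring isomorphism I -> J (rings possibly without unit) *)
Definition ring_iso_on (A : pzRingType) (I J : A -> Prop) (f : A -> A) : Prop :=
  [/\ forall x, I x -> J (f x),
      forall x y, I x -> I y -> f (x + y) = f x + f y,
      forall x y, I x -> I y -> f (x * y) = f x * f y,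
      forall x y, I x -> I y -> f x = f y -> x = y &
      forall y, J y -> exists2 x, I x & f x = y].

(* Ad s = A_s, alpha s = alpha_s (a total function; only its restriction to
   A_{s^{-1}} matters). *)
Record partial_action (S : invSemigroup) (A : pzRingType)
    (Ad : S -> A -> Prop) (alpha : S -> A -> A) : Prop := {
  pa_ideal : forall s, is_ideal (Ad (isg_mul s (isg_inv s)));
  pa_ideal_of : forall s, is_ideal_of (Ad (isg_mul s (isg_inv s))) (Ad s);
  pa_iso : forall s, ring_iso_on (Ad (isg_inv s)) (Ad s) (alpha s);
  pa_P1 : forall a : A, exists l : seq (S * A),
      (forall p, List.In p l -> idempotent_el (@isg_mul S) p.1 /\ Ad p.1 p.2)
      /\ a = \sum_(p <- l) p.2;
  pa_P2 : forall s t b, (Ad s b /\ Ad (isg_mul s t) b) <->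
      exists2 a, Ad (isg_inv s) a /\ Ad t a & alpha s a = b;
  pa_P3 : forall s t a, Ad (isg_inv t) a -> Ad (isg_inv (isg_mul s t)) a ->
      alpha s (alpha t a) = alpha (isg_mul s t) a }.

Definition gamma_rel (S : invSemigroup) (A : pzRingType)
  (Ad : S -> A -> Prop) (alpha : S -> A -> A) (s : S) : A -> A -> Prop :=
  fun x y => Ad (isg_inv s) x /\ alpha s x = y.

Lemma gamma_fun S A Ad alpha s x y z :
  @gamma_rel S A Ad alpha s x y -> gamma_rel Ad alpha s x z -> y = z.
Proof. by move=> [_ <-] [_ <-]. Qed.

Lemma gamma_inj S A Ad alpha (pa : @partial_action S A Ad alpha) s x y z :
  @gamma_rel S A Ad alpha s x z -> gamma_rel Ad alpha s y z -> x = y.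
Proof.
move=> [hx ex] [hy ey]; case: (pa_iso pa s) => _ _ _ inj _.
by apply: inj => //; rewrite ex ey.
Qed.

Definition gamma (S : invSemigroup) (A : pzRingType) (Ad : S -> A -> Prop)
  (alpha : S -> A -> A) (pa : partial_action Ad alpha) (s : S) : pbij A :=
  PBij (@gamma_fun S A Ad alpha s) (@gamma_inj S A Ad alpha pa s).

(* Main.v *)
Require Import Defs.
From mathcomp Require Import all_boot all_algebra.
From Stdlib Require Import FunctionalExtensionality PropExtensionality ProofIrrelevance.

Local Notation "x ** y" := (isg_mul x y) (at level 40, left associativity).

Lemma mA (S : invSemigroup) (x y z : S) : x ** (y ** z) = x ** y ** z.
Proof. exact: isg_mulA. Qed.

Lemma ctx2 (S : invSemigroup) (p u v w : S) : u ** v = w -> p ** u ** v = p ** w.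
Proof. by move=> <-; rewrite mA. Qed.
Lemma ctx3 (S : invSemigroup) (p u v w r : S) :
  u ** v ** w = r -> p ** u ** v ** w = p ** r.
Proof. by move=> <-; rewrite !mA. Qed.
Lemma ctx4 (S : invSemigroup) (p u v w z r : S) :
  u ** v ** w ** z = r -> p ** u ** v ** w ** z = p ** r.
Proof. by move=> <-; rewrite !mA. Qed.

Arguments mA {S}. Arguments ctx2 {S p u v w}. Arguments ctx3 {S p u v w r}. Arguments ctx4 {S p u v w z r}.

Lemma invK (S : invSemigroup) (s : S) : isg_inv (isg_inv s) = s.
Proof.
symmetry; apply: isg_inv_uniq; [exact: isg_inv2 | exact: isg_inv1].
Qed.

Lemma idem_inv (S : invSemigroup) (e : S) : e ** e = e -> isg_inv e = e.
Proof. by move=> He; symmetry; apply: isg_inv_uniq; rewrite !He. Qed.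

Lemma idem_mul (S : invSemigroup) (e f : S) :
  e ** e = e -> f ** f = f -> (e ** f) ** (e ** f) = e ** f.
Proof.
move=> He Hf.
pose x := isg_inv (e ** f).
have h1 : e ** f ** x ** e ** f = e ** f by rewrite -mA; exact: isg_inv1.
have h2 : x ** e ** f ** x = x by rewrite -(mA x e f); exact: isg_inv2.
have hax : isg_inv x = e ** f by rewrite invK.
have hx : x = isg_inv (e ** f) by [].
clearbody x.
have hy : f ** x ** e = x.
  rewrite [RHS]hx; apply: isg_inv_uniq.
    by rewrite !mA (ctx2 Hf) (ctx2 He) h1.
  by rewrite !mA (ctx2 He) (ctx2 Hf) (ctx4 h2).
have hxx : x ** x = x.
  have : f ** x ** e ** (f ** x ** e) = f ** x ** e by rewrite !mA (ctx4 h2).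
  by rewrite hy.
by rewrite -hax idem_inv.
Qed.

Arguments idem_mul {S e f}. Arguments idem_inv {S e}.
Lemma idem_comm (S : invSemigroup) (e f : S) :
  e ** e = e -> f ** f = f -> e ** f = f ** e.
Proof.
move=> He Hf.
have Hef := idem_mul He Hf; have Hfe := idem_mul Hf He.
rewrite -[in LHS](idem_inv Hef); symmetry; apply: isg_inv_uniq.
  move: Hef; rewrite !mA (ctx2 Hf) (ctx2 He) => Hef.
  by rewrite Hef.
move: Hfe; rewrite !mA (ctx2 He) (ctx2 Hf) => Hfe.
by rewrite Hfe.
Qed.

Arguments idem_comm {S e f}.
Lemma invs_idem (S : invSemigroup) (s : S) :
  isg_inv s ** s ** (isg_inv s ** s) = isg_inv s ** s.
Proof. by rewrite !mA isg_inv2. Qed.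

Lemma sinv_idem (S : invSemigroup) (s : S) :
  s ** isg_inv s ** (s ** isg_inv s) = s ** isg_inv s.
Proof. by rewrite !mA isg_inv1. Qed.

Arguments sinv_idem {S}. Arguments invs_idem {S}. Arguments invK {S}.
Lemma inv_mul (S : invSemigroup) (s t : S) :
  isg_inv (s ** t) = isg_inv t ** isg_inv s.
Proof.
have C := idem_comm (sinv_idem t) (invs_idem s).
move: C; rewrite !mA => C.
symmetry; apply: isg_inv_uniq.
  by rewrite !mA (ctx4 (p:=s) C) !mA isg_inv1 (ctx3 (isg_inv1 t)).
have D := ctx4 (p:=isg_inv t) C; move: D; rewrite !mA => D.
by rewrite ?mA -D ?mA isg_inv2 (ctx3 (isg_inv2 s)).
Qed.

Arguments inv_mul {S}.
Lemma pbij_ext X (f g : pbij X) :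
  (forall x y, pb_rel f x y <-> pb_rel g x y) -> f = g.
Proof.
case: f => rf ff fi; case: g => rg gf gi /= H.
have E : rf = rg.
  apply: functional_extensionality => x; apply: functional_extensionality => y.
  exact: propositional_extensionality.
subst rg; f_equal; apply: proof_irrelevance.
Qed.

Lemma sub_le X (f g : pbij X) :
  (forall x y, pb_rel f x y -> pb_rel g x y) -> nat_le (@pb_comp X) f g.
Proof.
move=> H; exists (pb_comp (pb_inv f) f).
  apply: pbij_ext => x z /=; split.
    move=> [y [[u [f1 f2]] [v [f3 f4]]]].
    have exy := pb_inj f1 f2; subst y.
    by exists v; split.
  move=> [u [f1 f2]]; have exz := pb_inj f1 f2; subst z.
  by exists x; split; exists u; split.
apply: pbij_ext => x z /=; split.
  move=> Hf; exists x; split; first by exists z; split.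
  exact: H.
move=> [y [[u [f1 f2]] g1]]; have exy := pb_inj f1 f2; subst y.
by move: (pb_fun (H _ _ f1) g1) => <-.
Qed.

Lemma idem_id (S : invSemigroup) (A : pzRingType) (Ad : S -> A -> Prop)
  (alpha : S -> A -> A) (pa : partial_action Ad alpha) (e : S) x :
  e ** e = e -> Ad e x -> alpha e x = x.
Proof.
move=> He Hx; case: (pa_iso pa e) => Hmap _ _ Hinj _.
rewrite idem_inv // in Hmap Hinj.
have h := pa_P3 pa (s := e) (t := e) (a := x).
rewrite He idem_inv // in h.
by apply: Hinj => //; [exact: Hmap | rewrite h].
Qed.

Arguments idem_id {S A Ad alpha} pa {e x}.
Lemma dom_sub (S : invSemigroup) (A : pzRingType) (Ad : S -> A -> Prop)
  (alpha : S -> A -> A) (pa : partial_action Ad alpha) (s : S) x :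
  Ad (isg_inv s) x -> Ad (isg_inv s ** s) x.
Proof.
case: (pa_ideal_of pa (isg_inv s)) => sub _ _ _.
by rewrite invK in sub; exact: sub.
Qed.

Arguments dom_sub {S A Ad alpha} pa {s x}.
Lemma inv_cancel (S : invSemigroup) (A : pzRingType) (Ad : S -> A -> Prop)
  (alpha : S -> A -> A) (pa : partial_action Ad alpha) (s : S) x :
  Ad (isg_inv s) x -> alpha (isg_inv s) (alpha s x) = x.
Proof.
move=> Hx.
have h := pa_P3 pa (s := isg_inv s) (t := s) (a := x).
rewrite (idem_inv (invs_idem s)) in h.
rewrite h //; last exact: (dom_sub pa Hx).
apply: (idem_id pa (invs_idem s)); exact: (dom_sub pa Hx).
Qed.

Arguments inv_cancel {S A Ad alpha} pa {s x}.
Lemma idem_sub (S : invSemigroup) (A : pzRingType) (Ad : S -> A -> Prop)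
  (alpha : S -> A -> A) (pa : partial_action Ad alpha) (g t : S) x :
  g ** g = g -> Ad g x -> Ad (g ** t) x -> Ad t x.
Proof.
move=> Hg Hx Hgt.
have [a [Ha1 Ha2] Ha3] := (pa_P2 pa g t x).1 (conj Hx Hgt).
rewrite idem_inv // in Ha1.
by rewrite -Ha3 (idem_id pa Hg Ha1).
Qed.

Arguments idem_sub {S A Ad alpha} pa {g t x}.
Theorem mainTheorem7 (S : invSemigroup) (A : pzRingType)
  (Ad : S -> A -> Prop) (alpha : S -> A -> A)
  (pa : partial_action Ad alpha) :
  premorphism (@pb_comp A) (@pb_inv A) (gamma pa).
Proof.
split.
- move=> s t; apply: sub_le => x z /= [y [[Hx Hy] [Hy' Hz]]]; subst y z.
  have Hst : Ad (isg_inv (s ** t)) x.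
    rewrite inv_mul.
    have [] := (pa_P2 pa (isg_inv t) (isg_inv s) x).2 => //.
    exists (alpha t x); last exact: (inv_cancel pa Hx).
    split => //; rewrite invK.
    by case: (pa_iso pa t) => Hmap _ _ _ _; exact: Hmap.
  by split => //; rewrite (pa_P3 pa Hx).
- move=> s; apply: pbij_ext => x y /=; split.
  + move=> [Hy Hx]; subst x; split; last exact: (inv_cancel pa Hy).
    rewrite invK.
    by case: (pa_iso pa s) => Hmap _ _ _ _; exact: Hmap.
  + move=> [Hx Hy]; subst y; split.
      by case: (pa_iso pa (isg_inv s)) => Hmap _ _ _ _; exact: Hmap.
    by have := inv_cancel pa Hx; rewrite invK.
- move=> s t [e He ->]; apply: sub_le => x y /= [Hx <-].
  have Hg := dom_sub pa Hx.
  have Eie : isg_inv (t ** e) = e ** isg_inv t by rewrite inv_mul idem_inv.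
  rewrite Eie in Hg Hx.
  have C := idem_comm He (invs_idem t).
  move: C; rewrite !mA => C.
  have Hgt : e ** isg_inv t ** (t ** e) ** isg_inv t = e ** isg_inv t.
    by rewrite !mA C (ctx2 He) -C (ctx3 (isg_inv2 t)).
  have Hge : e ** isg_inv t ** (t ** e) ** e = e ** isg_inv t ** (t ** e).
    by rewrite !mA (ctx2 He).
  have gI : e ** isg_inv t ** (t ** e) ** (e ** isg_inv t ** (t ** e))
          = e ** isg_inv t ** (t ** e).
    by rewrite -Eie invs_idem.
  have Ht : Ad (isg_inv t) x.
    by apply: (idem_sub pa gI Hg); rewrite Hgt.
  have Hex : Ad e x.
    by apply: (idem_sub pa gI Hg); rewrite Hge.
  split => //.
  have h := pa_P3 pa (s := t) (t := e) (a := x).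
  rewrite idem_inv // (idem_id pa He Hex) in h.
  by apply: h => //; rewrite Eie.
Qed.
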